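(* Let $q\ge 2$ and $n\ge 1$ be integers and let $m=n+1$. Under uniform transmission over the $1$-insertion channel with input length $n$, $$\min_{{\boldsymbol y}\in\Sigma_q^{m}} \mathsf{H}^{\mathsf{In}}_{1\text{-}\mathsf{Ins}}({\boldsymbol y}) = 0,$$ and this minimum is attained only by channel outputs having a single run.
   Context: $\Sigma_q=\{0,1,\dots,q-1\}$. For sequences ${\boldsymbol x}$ of length $\ell$ and ${\boldsymbol y}$ of length $N\ge \ell$, the embedding number $\omega_{{\boldsymbol x}}({\boldsymbol y})$ is the number of index tuples $1\le i_1<\dots<i_\ell\le N$ with $y_{i_j}=x_j$ for all $j$. The $k$-insertion channel with input length $n$ maps ${\boldsymbol x}\in\Sigma_q^n$ to ${\boldsymbol y}\in\Sigma_q^{n+k}$ with probability $\Pr\{{\boldsymbol y}\mid{\boldsymbol x}\}=\omega_{{\boldsymbol x}}({\boldsymbol y})/\big(\binom{n+k}{k}q^k\big)$. Under uniform transmission the input $X$ is uniform on $\Sigma_q^n$, and for an output ${\boldsymbol y}$ the input entropy is $\mathsf{H}^{\mathsf{In}}_{k\text{-}\mathsf{Ins}}({\boldsymbol y})=H(X\mid Y={\boldsymbol y})=-\sum_{{\boldsymbol x}}P({\boldsymbol x}\mid{\boldsymbol y})\log_2 P({\boldsymbol x}\mid{\boldsymbol y})$ with $P({\boldsymbol x}\mid {\boldsymbol y})=\Pr\{{\boldsymbol y}\mid{\boldsymbol x}\}/\sum_{{\boldsymbol x}'\in\Sigma_q^n}\Pr\{{\boldsymbol y}\mid{\boldsymbol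 x}'\}$. A run is a maximal block of identical consecutive symbols. *)

(* Defs.v *)
From mathcomp Require Import all_boot all_order all_algebra.
From mathcomp Require Import reals exp.
Set Implicit Arguments. Unset Strict Implicit. Unset Printing Implicit Defensive.
Import Order.TTheory GRing.Theory Num.Theory.
Local Open Scope ring_scope.

Definition word (q l : nat) := {ffun 'I_l -> 'I_q}.

(* Embedding number omega_x(y): number of index tuples i_1 < ... < i_l in
   {1..N} (here 0-based: strictly increasing maps 'I_l -> 'I_N) with
   y_{i_j} = x_j for all j. *)
Definition embnum (q l N : nat) (x : word q l) (y : word q N) : nat :=
  #|[set f : {ffun 'I_l -> 'I_N} |
      [forall j : 'I_l, forall j' : 'I_l, (j < j')%N ==> (f j < f j')%N]
      && [forall j : 'I_l, y (f j) == x j]]|.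

Definition ins_prob (R : realType) (q n k : nat) (x : word q n) (y : word q (n + k)) : R :=
  (embnum x y)%:R / ('C(n + k, k)%:R * (q%:R ^+ k)).

(* Posterior P(x | y) under uniform input distribution. *)
Definition posterior (R : realType) (q n k : nat) (y : word q (n + k)) (x : word q n) : R :=
  ins_prob R x y / \sum_(x' : word q n) ins_prob R x' y.

Definition log2 (R : realType) (p : R) : R := ln p / ln 2.

Definition input_entropy (R : realType) (q n k : nat) (y : word q (n + k)) : R :=
  - \sum_(x : word q n)
      (let p := posterior R y x in if p == 0 then 0 else p * log2 p).

Definition single_run (q N : nat) (y : word q N) : Prop :=
  forall i j : 'I_N, y i = y j.

(* Main.v *)
Require Import Defs.
From mathcomp Require Import all_boot all_order all_algebra.
From mathcomp Require Import reals exp.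
From mathcomp Require Import zify.
Import Order.TTheory GRing.Theory Num.Theory.
Local Open Scope ring_scope.

Lemma dl_subproof (n : nat) (i : 'I_(n+1)) (j : 'I_n) :
  ((if (j < i)%N then (j : nat) else j.+1) < n + 1)%N.
Proof. have := ltn_ord j; case: ifP => _; lia. Qed.

Definition dl (n : nat) (i : 'I_(n+1)) (j : 'I_n) : 'I_(n+1) :=
  Ordinal (dl_subproof n i j).

Lemma dl_mono (n : nat) (i : 'I_(n+1)) (j j' : 'I_n) :
  (j < j')%N -> (dl n i j < dl n i j')%N.
Proof. rewrite /dl /=; case: ifP; case: ifP; lia. Qed.

Lemma embnum_pos (q n : nat) (x : word q n) (y : word q (n+1))
  (f : 'I_n -> 'I_(n+1)) :
  (forall j j' : 'I_n, (j < j')%N -> (f j < f j')%N) -> (forall j, y (f j) = x j) ->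
  (0 < embnum x y)%N.
Proof.
move=> hm hf; rewrite /embnum card_gt0; apply/set0Pn; exists (finfun f).
rewrite inE; apply/andP; split; apply/forallP => j.
  by apply/forallP => j'; apply/implyP => h; rewrite !ffunE; exact: hm.
by rewrite ffunE; apply/eqP.
Qed.

Lemma embnum0 (q n : nat) (x : word q n) (y : word q (n+1)) (j : 'I_n) :
  (forall i, y i != x j) -> embnum x y = 0%N.
Proof.
move=> hj; apply/eqP; rewrite cards_eq0; apply/eqP/setP => f; rewrite !inE.
apply/negbTE; apply/negP => /andP [_ /forallP /(_ j) /eqP].
by move/eqP; rewrite (negbTE (hj (f j))).
Qed.

Lemma ins_prob_ge0 (R : realType) (q n : nat) (x : word q n) (y : word q (n+1)) :
  0 <= ins_prob R (k:=1) x y.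
Proof. by rewrite /ins_prob divr_ge0 // mulr_ge0 // exprn_ge0. Qed.

Lemma ins_prob_gt0 (R : realType) (q n : nat) (x : word q n) (y : word q (n+1)) :
  (0 < q)%N -> (0 < embnum x y)%N -> 0 < ins_prob R (k:=1) x y.
Proof.
move=> hq he; rewrite /ins_prob divr_gt0 ?ltr0n // mulr_gt0 ?ltr0n ?bin1 ?addn1 //.
Qed.

Lemma post_bounds (R : realType) (q n : nat) (y : word q (n+1)) (x : word q n) :
  0 <= posterior R y x <= 1.
Proof.
rewrite /posterior.
set S := \sum_(x' : word q n) ins_prob R x' y.
have S0 : 0 <= S by apply: sumr_ge0 => *; apply: ins_prob_ge0.
have aS : ins_prob R x y <= S.
  by rewrite /S (bigD1 x) //= lerDl sumr_ge0 // => *; apply: ins_prob_ge0.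
case: (eqVneq S 0) => [->|Sn0]; first by rewrite invr0 mulr0 lexx ler01.
have Sp : 0 < S by rewrite lt_def Sn0 S0.
by rewrite divr_ge0 ?ins_prob_ge0 //= ler_pdivrMr // mul1r.
Qed.

Lemma ln2_gt0 (R : realType) : 0 < ln (2 : R).
Proof. by apply: ln_gt0; rewrite ltr1n. Qed.

Lemma term_le0 (R : realType) (p : R) : 0 <= p <= 1 ->
  (if p == 0 then 0 else p * log2 p) <= 0.
Proof.
case/andP => p0 p1; case: eqP => // _; rewrite /log2.
apply: mulr_ge0_le0 => //; apply: mulr_le0_ge0; first exact: ln_le0.
by rewrite invr_ge0 ltW // ln2_gt0.
Qed.

Theorem theorem8 (R : realType) (q n : nat) (hq : (2 <= q)%N) (hn : (1 <= n)%N) :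
  (exists y : word q (n + 1), input_entropy R (k:=1) y = 0)
  /\ (forall y : word q (n + 1), 0 <= input_entropy R (k:=1) y)
  /\ (forall y : word q (n + 1), input_entropy R (k:=1) y = 0 -> single_run y).
Proof.
have q0 : (0 < q)%N by lia.
split; [|split].
- pose c : 'I_q := Ordinal q0.
  pose y0 : word q (n+1) := [ffun _ => c].
  pose x0 : word q n := [ffun _ => c].
  exists y0.
  have hz : forall x, x != x0 -> ins_prob R (k:=1) x y0 = 0.
    move=> x nx; case: (pickP (fun j => x j != c)) => [j hj | h].
      by rewrite /ins_prob (@embnum0 _ _ x y0 j) ?mul0r // => i; rewrite ffunE eq_sym.
    case/eqP: nx; apply/ffunP => j; rewrite ffunE; by move/negbFE/eqP: (h j).
  have hp : 0 < ins_prob R (k:=1) x0 y0.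
    apply: ins_prob_gt0 => //; apply: (@embnum_pos _ _ _ _ (widen_ord (leq_addr 1 n))).
      by [].
    by move=> j; rewrite !ffunE.
  have hS : \sum_(x' : word q n) ins_prob R (k:=1) x' y0 = ins_prob R (k:=1) x0 y0.
    rewrite (bigD1 x0) //= big1 ?addr0 // => x hx; exact: hz.
  rewrite /input_entropy big1 ?oppr0 // => x _.
  rewrite /posterior hS.
  case: (eqVneq x x0) => [hx|nx]; first rewrite hx.
    by rewrite divff ?gt_eqF // /log2 ln1 mul0r mulr0.
  by rewrite (hz x nx) mul0r eqxx.
- move=> y; rewrite /input_entropy oppr_ge0; apply: sumr_le0 => x _.
  apply: term_le0; exact: post_bounds.
- move=> y H0 i j; apply/eqP; apply/contraT => nij.
  have o0p : (0 < n + 1)%N by lia.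
  pose o0 : 'I_(n+1) := Ordinal o0p.
  have : [exists a : 'I_(n+1), exists b : 'I_(n+1),
            (a.+1 == b :> nat) && (y a != y b)].
    apply/contraT; rewrite negb_exists => /forallP hall.
    suff hk : forall k (hk : (k < n + 1)%N), y (Ordinal hk) = y o0.
      move/negP: nij => nij; exfalso; apply: nij; apply/eqP.
      have -> : i = Ordinal (ltn_ord i) by apply: val_inj.
      have -> : j = Ordinal (ltn_ord j) by apply: val_inj.
      by rewrite !hk.
    elim=> [|k IH] hk.
      by congr (y _); apply: val_inj.
    have hk' : (k < n + 1)%N by lia.
    rewrite -(IH hk').
    move: (hall (Ordinal hk')); rewrite negb_exists => /forallP /(_ (Ordinal hk)).
    rewrite /= eqxx /= => /negbNE /eqP ->. by [].
  case/existsP => a /existsP [b /andP [/eqP hab hy]].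
  have han : (a < n)%N by have := ltn_ord b; lia.
  pose ja : 'I_n := Ordinal han.
  pose x1 : word q n := [ffun t => y (@dl n a t)].
  pose x2 : word q n := [ffun t => y (@dl n b t)].
  have e1 : x1 ja = y b.
    rewrite ffunE; congr (y _); apply: val_inj; rewrite /= ltnn; lia.
  have e2 : x2 ja = y a.
    rewrite ffunE; congr (y _); apply: val_inj; rewrite /=.
    by have -> : (a < b)%N by lia.
  have n12 : x2 != x1.
    apply/negP => /eqP h; move: hy; rewrite -e1 -e2 h eqxx. by [].
  have a1 : 0 < ins_prob R (k:=1) x1 y.
    apply: ins_prob_gt0 => //; apply: (@embnum_pos _ _ _ _ (@dl n a)).
      by move=> *; apply: dl_mono.
    by move=> t; rewrite ffunE.
  have a2 : 0 < ins_prob R (k:=1) x2 y.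
    apply: ins_prob_gt0 => //; apply: (@embnum_pos _ _ _ _ (@dl n b)).
      by move=> *; apply: dl_mono.
    by move=> t; rewrite ffunE.
  set S := \sum_(x' : word q n) ins_prob R (k:=1) x' y.
  have hS : ins_prob R (k:=1) x1 y + ins_prob R (k:=1) x2 y <= S.
    rewrite /S (bigD1 x1) //= lerD2l (bigD1 x2) //= lerDl.
    by apply: sumr_ge0 => *; apply: ins_prob_ge0.
  have Sp : 0 < S by apply: lt_le_trans hS; apply: addr_gt0.
  have p0 : 0 < posterior R y x1 by rewrite /posterior divr_gt0.
  have p1 : posterior R y x1 < 1.
    rewrite /posterior ltr_pdivrMr // mul1r; apply: lt_le_trans hS.
    by rewrite ltrDl.
  have t1 : (if posterior R y x1 == 0 then 0 else posterior R y x1 * log2 (posterior R y x1)) < 0.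
    rewrite gt_eqF //.
    have l2 : 0 < (ln (2:R))^-1 by rewrite invr_gt0 ln2_gt0.
    have lp : ln (posterior R y x1) < 0 by apply: ln_lt0; rewrite p0 p1.
    rewrite /log2 pmulr_rlt0 //.
    by rewrite pmulr_llt0.
  have t2 : \sum_(x | x != x1)
      (if posterior R y x == 0 then 0 else posterior R y x * log2 (posterior R y x)) <= 0.
    by apply: sumr_le0 => x _; apply: term_le0; exact: post_bounds.
  have : input_entropy R (k:=1) y > 0.
    rewrite /input_entropy oppr_gt0 (bigD1 x1) //.
    by have := ltr_leD t1 t2; rewrite addr0.
  by rewrite H0 ltxx.
Qed.
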